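(* Let $\Gamma(t)=\lim_{n\to\infty}\frac1n\log\mathbb{E}(e^{tH_n})$ and $p^*=\frac{a_0}{1-\sum_{i=1}^\infty a_i}$. Then: (1) for $t\ge0$, $$\log\big(1+(e^t-1)p^*\big)\le\Gamma(t)\le\log\Big(1+(e^t-1)\sum_{i=0}^\infty a_i\Big);$$ (2) for $t<0$, $$\max\Big\{\log\big(1+(e^t-1)p^*\big),\ \log(1-a_0)\Big\}\le\Gamma(t)\le\log\big(1+(e^t-1)a_0\big).$$
   Context: Standing setup (discrete-time Hawkes process, DTHP). Let $(a_i)_{i=0}^\infty$ be a sequence of strictly positive real numbers with $\sum_{i=0}^\infty a_i<1$ and $\sum_{i=1}^\infty i\,a_i<\infty$. The arrival process $\{\xi_n\}_{n\ge1}$ is a sequence of $\{0,1\}$-valued random variables on a probability space $(\Omega,\mathcal F,\mathbb P)$ with $\mathbb{P}(\xi_1=1)=a_0$, $\mathbb P(\xi_1=0)=1-a_0$, and for $n\ge2$, $$\mathbb{P}(\xi_n=1\mid \xi_1,\dots,\xi_{n-1})=a_0+\sum_{i=1}^{n-1}a_{n-i}\xi_i,\qquad \mathbb{P}(\xi_n=0\mid \xi_1,\dots,\xi_{n-1})=1-\Big(a_0+\sum_{i=1}^{n-1}a_{n-i}\xi_i\Big).$$ The DTHP is $H_n=\sum_{i=1}^n\xi_i$, and $\mathcal F_n=\sigma(\xi_1,\dots,\xi_n)$. The limit $\Gamma(t)$ exists for every $t$. One may use that $\xi_1,\dots,\xi_n$ are associated random variables for each $n$ (a fact known from the literature). *)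

(* Defs.v *)
From Stdlib Require Import Reals List Arith.
From Coquelicot Require Import Coquelicot.
Import ListNotations.
Open Scope R_scope.

Fixpoint bool_lists (n : nat) : list (list bool) :=
  match n with
  | O => [ [] ]
  | S m => flat_map (fun l => [l ++ [false]; l ++ [true]]) (bool_lists m)
  end.

Definition ind (b : bool) : R := if b then 1 else 0.

(* x_i for 1 <= i, read from the list xs = [x_1; ...; x_n]. *)
Definition xi (xs : list bool) (i : nat) : bool := nth (i - 1) xs false.

(* Conditional intensity of the DTHP at time k given x_1..x_{k-1}:
   a_0 + sum_{i=1}^{k-1} a_{k-i} x_i. *)
Definition intensity (a : nat -> R) (xs : list bool) (k : nat) : R :=
  a 0%nat + fold_right Rplus 0
    (map (fun i => a (k - i)%nat * ind (xi xs i)) (seq 1 (k - 1))).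

(* Joint law of (xi_1, ..., xi_n) of the DTHP:
   P(xi_1 = x_1, ..., xi_n = x_n)
     = prod_{k=1}^n P(xi_k = x_k | xi_1 = x_1, ..., xi_{k-1} = x_{k-1}). *)
Definition dthp_pmf (a : nat -> R) (xs : list bool) : R :=
  fold_right Rmult 1
    (map (fun k => if xi xs k then intensity a xs k else 1 - intensity a xs k)
         (seq 1 (length xs))).

Definition Hval (xs : list bool) : R := INR (length (filter (fun b => b) xs)).

Definition dthp_mgf (a : nat -> R) (t : R) (n : nat) : R :=
  fold_right Rplus 0
    (map (fun xs => dthp_pmf a xs * exp (t * Hval xs)) (bool_lists n)).

Definition pstar (a : nat -> R) : R := a 0%nat / (1 - (Series a - a 0%nat)).

(* Main.v *)
Require Import Defs.
From Stdlib Require Import Reals List Arith Lia Lra Psatz FunctionalExtensionality.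
From Coquelicot Require Import Coquelicot.
Import ListNotations.
Open Scope R_scope.

Lemma exp_le' x y : x <= y -> exp x <= exp y.
Proof. intros H; destruct (Rle_lt_or_eq_dec _ _ H). left; now apply exp_increasing. subst; lra. Qed.

Lemma fsum_c (l : list R) c : fold_right Rplus c l = fold_right Rplus 0 l + c.
Proof. induction l; simpl; [lra| rewrite IHl; ring]. Qed.

Lemma fprod_c (l : list R) c : fold_right Rmult c l = fold_right Rmult 1 l * c.
Proof. induction l; simpl; [lra| rewrite IHl; ring]. Qed.

Lemma fsum_app (l1 l2 : list R) : fold_right Rplus 0 (l1 ++ l2) = fold_right Rplus 0 l1 + fold_right Rplus 0 l2.
Proof. rewrite fold_right_app, fsum_c; ring. Qed.

Lemma fsum_ext {A} (l : list A) f g : (forall x, In x l -> f x = g x) ->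
  fold_right Rplus 0 (map f l) = fold_right Rplus 0 (map g l).
Proof. intros H; now rewrite (map_ext_in _ _ _ H). Qed.

Lemma fsum_le {A} (l : list A) f g : (forall x, In x l -> f x <= g x) ->
  fold_right Rplus 0 (map f l) <= fold_right Rplus 0 (map g l).
Proof. induction l; simpl; intros H; [lra|]. 
  assert (f a <= g a) by auto. assert (fold_right Rplus 0 (map f l) <= fold_right Rplus 0 (map g l)) by auto. lra. Qed.

Lemma fsum_plus {A} (l : list A) f g :
  fold_right Rplus 0 (map (fun x => f x + g x) l) = fold_right Rplus 0 (map f l) + fold_right Rplus 0 (map g l).
Proof. induction l; simpl; [lra| rewrite IHl; ring]. Qed.

Lemma fsum_scal {A} (l : list A) f c :
  fold_right Rplus 0 (map (fun x => c * f x) l) = c * fold_right Rplus 0 (map f l).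
Proof. induction l; simpl; [lra| rewrite IHl; ring]. Qed.

Lemma fprod_nonneg {A} (l : list A) f : (forall x, In x l -> 0 <= f x) ->
  0 <= fold_right Rmult 1 (map f l).
Proof. induction l; simpl; intros H; [lra|]. apply Rmult_le_pos; auto. Qed.

Lemma fsum_flat_map {A B} (h : B -> R) (g : A -> list B) L :
  fold_right Rplus 0 (map h (flat_map g L)) = fold_right Rplus 0 (map (fun l => fold_right Rplus 0 (map h (g l))) L).
Proof. induction L; simpl; auto. rewrite map_app, fsum_app, IHL; auto. Qed.

Definition sumS (f : nat -> R) n := fold_right Rplus 0 (map f (seq 1 n)).

Lemma sumS_S f n : sumS f (S n) = sumS f n + f (S n).
Proof. unfold sumS. rewrite seq_S, map_app, fsum_app. simpl. ring. Qed.

Lemma sumS_first f n : sumS f (S n) = f 1%nat + sumS (fun i => f (S i)) n.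
Proof. unfold sumS. simpl. f_equal. rewrite <- seq_shift, map_map. auto. Qed.

Lemma sumS_rev g n : sumS (fun i => g (S n - i)%nat) n = sumS g n.
Proof. revert g; induction n; intros g. reflexivity.
  rewrite sumS_first. replace (S (S n) - 1)%nat with (S n) by lia.
  rewrite sumS_S, Rplus_comm. f_equal. rewrite <- (IHn g). reflexivity.
Qed.


Definition E (a : nat -> R) n (F : list bool -> R) :=
  fold_right Rplus 0 (map (fun xs => dthp_pmf a xs * F xs) (bool_lists n)).

Lemma bool_lists_len n xs : In xs (bool_lists n) -> length xs = n.
Proof. revert xs; induction n; simpl; intros xs H.
  destruct H as [<-|[]]; auto.
  apply in_flat_map in H. destruct H as [l [Hl H]]. simpl in H.
  destruct H as [<-|[<-|[]]]; rewrite length_app, (IHn l Hl); simpl; lia. Qed.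

Lemma xi_app xs b i : (i - 1 < length xs)%nat -> xi (xs ++ [b]) i = xi xs i.
Proof. intros H; unfold xi; now rewrite app_nth1. Qed.

Lemma xi_last xs b : xi (xs ++ [b]) (S (length xs)) = b.
Proof. unfold xi. replace (S (length xs) - 1)%nat with (length xs) by lia. apply nth_middle. Qed.

Lemma intensity_app a xs b k : (k <= S (length xs))%nat -> intensity a (xs ++ [b]) k = intensity a xs k.
Proof. intros H; unfold intensity. f_equal. apply fsum_ext. intros i Hi. apply in_seq in Hi.
  rewrite xi_app; auto; lia. Qed.

Lemma pmf_app a xs b : dthp_pmf a (xs ++ [b]) =
  dthp_pmf a xs * (if b then intensity a xs (S (length xs)) else 1 - intensity a xs (S (length xs))).
Proof. unfold dthp_pmf. rewrite length_app. simpl length. rewrite Nat.add_1_r, seq_S, map_app, fold_right_app.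
  rewrite fprod_c. simpl. replace (1 + length xs)%nat with (S (length xs)) by lia.
  rewrite xi_last, intensity_app by lia. f_equal; [|ring].
  f_equal. apply map_ext_in. intros k Hk. apply in_seq in Hk. rewrite xi_app by lia.
  rewrite intensity_app by lia. reflexivity. Qed.

Definition lam a n xs := intensity a xs (S n).

Lemma Estep a n F : E a (S n) F =
  E a n (fun xs => lam a n xs * F (xs ++ [true]) + (1 - lam a n xs) * F (xs ++ [false])).
Proof. unfold E. simpl bool_lists. rewrite fsum_flat_map. apply fsum_ext. intros l Hl.
  simpl. rewrite !pmf_app, (bool_lists_len _ _ Hl). unfold lam. ring. Qed.

Lemma E_ext a n F G : (forall xs, In xs (bool_lists n) -> F xs = G xs) -> E a n F = E a n G.
Proof. intros H. unfold E. apply fsum_ext. intros x Hx; rewrite H; auto. Qed.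

Lemma E_plus a n F G : E a n (fun xs => F xs + G xs) = E a n F + E a n G.
Proof. unfold E. rewrite <- fsum_plus. apply fsum_ext. intros; ring. Qed.

Lemma E_scal a n c F : E a n (fun xs => c * F xs) = c * E a n F.
Proof. unfold E. rewrite <- fsum_scal. apply fsum_ext. intros; ring. Qed.

Lemma E_0 a F : E a 0 F = F [].
Proof. unfold E, dthp_pmf. simpl. ring. Qed.

Lemma E_const a n c : E a n (fun _ => c) = c.
Proof. induction n. apply E_0. rewrite Estep. transitivity (E a n (fun _ => c)); [apply E_ext; intros; ring | exact IHn]. Qed.

Lemma E_fsum {A} a n (l : list A) (g : A -> list bool -> R) :
  E a n (fun xs => fold_right Rplus 0 (map (fun i => g i xs) l)) =
  fold_right Rplus 0 (map (fun i => E a n (g i)) l).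
Proof. induction l; simpl. apply E_const. rewrite E_plus, IHl. auto. Qed.

Lemma E_le a n F G : (forall xs, 0 <= dthp_pmf a xs) ->
  (forall xs, In xs (bool_lists n) -> F xs <= G xs) -> E a n F <= E a n G.
Proof. intros Hp H. unfold E. apply fsum_le. intros x Hx. apply Rmult_le_compat_l; auto. Qed.

Lemma E_marg a m F : (forall xs b, (m <= length xs)%nat -> F (xs ++ [b]) = F xs) ->
  forall d, E a (m + d) F = E a m F.
Proof. intros H d; induction d. now rewrite Nat.add_0_r.
  rewrite Nat.add_succ_r, Estep, <- IHd. apply E_ext. intros xs Hx.
  apply bool_lists_len in Hx. rewrite !H by lia. ring. Qed.


Lemma fsum_zero {A} (l : list A) : fold_right Rplus 0 (map (fun _ => 0) l) = 0.
Proof. induction l; simpl; auto; lra. Qed.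

Lemma ind_01 b : 0 <= Defs.ind b <= 1.
Proof. destruct b; simpl; lra. Qed.

Lemma intensity_ge a xs k : (forall i, 0 < a i) -> a 0%nat <= intensity a xs k.
Proof. intros Hp. unfold intensity.
  assert (fold_right Rplus 0 (map (fun _ : nat => 0) (seq 1 (k - 1))) <=
  fold_right Rplus 0 (map (fun i : nat => a (k - i)%nat * Defs.ind (xi xs i)) (seq 1 (k - 1)))).
  { apply fsum_le. intros. apply Rmult_le_pos. left; auto. apply ind_01. }
  rewrite fsum_zero in H. lra. Qed.

Lemma intensity_le a xs k : (forall i, 0 < a i) ->
  (forall n, a 0%nat + sumS a n <= Series a) -> intensity a xs k <= Series a.
Proof. intros Hp HB. apply Rle_trans with (a 0%nat + sumS (fun i => a (k - i)%nat) (k - 1)).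
  unfold intensity, sumS. apply Rplus_le_compat_l. apply fsum_le. intros i _.
  pose proof (ind_01 (xi xs i)). pose proof (Hp (k-i)%nat). nra.
  destruct k. simpl. specialize (HB 0%nat). unfold sumS in *. simpl in *. lra.
  replace (S k - 1)%nat with k by lia. rewrite sumS_rev. apply HB. Qed.

Lemma pmf_nonneg a xs : (forall k, 0 <= intensity a xs k <= 1) -> 0 <= dthp_pmf a xs.
Proof. intros H. unfold dthp_pmf. apply fprod_nonneg. intros k _. destruct (xi xs k); specialize (H k); lra. Qed.

Definition blel (xs ys : list bool) := Forall2 (fun x y => x = true -> y = true) xs ys.
Definition mono (f : list bool -> R) := forall xs ys, blel xs ys -> f xs <= f ys.

Lemma lel_nth xs ys j : blel xs ys -> nth j xs false = true -> nth j ys false = true.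
Proof. intros H; revert j; induction H; intros j; destruct j; simpl; auto. Qed.

Lemma lel_refl xs : blel xs xs.
Proof. induction xs; constructor; auto. Qed.

Lemma lel_app xs ys b c : blel xs ys -> (b = true -> c = true) -> blel (xs ++ [b]) (ys ++ [c]).
Proof. intros H Hb. apply Forall2_app; auto. Qed.

Lemma intensity_mono a xs ys k : (forall i, 0 < a i) -> blel xs ys -> intensity a xs k <= intensity a ys k.
Proof. intros Hp H. unfold intensity. apply Rplus_le_compat_l. apply fsum_le. intros i _.
  apply Rmult_le_compat_l. left; auto. unfold xi.
  pose proof (lel_nth _ _ (i-1) H). destruct (nth (i-1) xs false), (nth (i-1) ys false); simpl in *; try lra.
  Qed.

Lemma assoc a n : (forall xs k, 0 <= intensity a xs k <= 1) -> (forall i, 0 < a i) ->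
  forall f g, mono f -> mono g -> E a n f * E a n g <= E a n (fun x => f x * g x).
Proof. intros Hi Hp. induction n; intros f g Hf Hg.
  rewrite !E_0. lra.
  rewrite !Estep.
  set (F := fun xs => lam a n xs * f (xs ++ [true]) + (1 - lam a n xs) * f (xs ++ [false])).
  set (G := fun xs => lam a n xs * g (xs ++ [true]) + (1 - lam a n xs) * g (xs ++ [false])).
  assert (monoF : forall h, mono h -> mono (fun xs => lam a n xs * h (xs ++ [true]) + (1 - lam a n xs) * h (xs ++ [false]))).
  { intros h Hh xs ys Hxy. 
    assert (L1 : lam a n xs <= lam a n ys) by (apply intensity_mono; auto).
    pose proof (Hi xs (S n)) as L2. pose proof (Hi ys (S n)) as L3. unfold lam in *.
    assert (h (xs ++ [true]) <= h (ys ++ [true])) by (apply Hh, lel_app; auto).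
    assert (h (xs ++ [false]) <= h (ys ++ [false])) by (apply Hh, lel_app; auto).
    assert (h (ys ++ [false]) <= h (ys ++ [true])) by (apply Hh, lel_app; auto; apply lel_refl).
    nra. }
  apply Rle_trans with (E a n (fun x => F x * G x)). apply IHn; subst F G; apply monoF; auto.
  apply E_le. intros; apply pmf_nonneg; auto.
  intros xs _. subst F G. simpl.
  assert (h1 : f (xs ++ [false]) <= f (xs ++ [true])) by (apply Hf, lel_app; auto; apply lel_refl).
  assert (h2 : g (xs ++ [false]) <= g (xs ++ [true])) by (apply Hg, lel_app; auto; apply lel_refl).
  pose proof (Hi xs (S n)). unfold lam in *.
  set (l := intensity a xs (S n)) in *.
  assert (0 <= l * (1 - l) * ((f (xs ++ [true]) - f (xs ++ [false])) * (g (xs ++ [true]) - g (xs ++ [false])))).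
  { apply Rmult_le_pos. nra. apply Rmult_le_pos; lra. }
  nra. Qed.

Lemma assoc_anti a n : (forall xs k, 0 <= intensity a xs k <= 1) -> (forall i, 0 < a i) ->
  forall f g, mono (fun x => - f x) -> mono (fun x => - g x) -> E a n f * E a n g <= E a n (fun x => f x * g x).
Proof. intros Hi Hp f g Hf Hg. pose proof (assoc a n Hi Hp _ _ Hf Hg).
  replace (fun x => f x * g x) with (fun x => - f x * - g x) by (apply functional_extensionality; intros; ring).
  replace (E a n f * E a n g) with (E a n (fun x => - f x) * E a n (fun x => - g x)); auto.
  replace (fun x => - f x) with (fun x => -1 * f x) by (apply functional_extensionality; intros; ring).
  replace (fun x => - g x) with (fun x => -1 * g x) by (apply functional_extensionality; intros; ring).
  rewrite !E_scal. ring. Qed.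


Lemma Hval_app xs b : Hval (xs ++ [b]) = Hval xs + Defs.ind b.
Proof. unfold Hval. rewrite filter_app, length_app, plus_INR. destruct b; simpl; ring. Qed.

Lemma Hval_cons x xs : Hval (x :: xs) = Defs.ind x + Hval xs.
Proof. unfold Hval. destruct x; cbn [filter length]; [rewrite S_INR|]; simpl; ring. Qed.

Lemma Hval_mono xs ys : blel xs ys -> Hval xs <= Hval ys.
Proof. intros H; unfold blel in H; induction H. lra. rewrite !Hval_cons.
  destruct x, y; simpl; try lra. Qed.

Definition mean a n := E a n (lam a n).

Lemma M_step a t n : dthp_mgf a t (S n) =
  E a n (fun xs => exp (t * Hval xs) * (1 + (exp t - 1) * lam a n xs)).
Proof. unfold dthp_mgf. fold (E a (S n) (fun xs => exp (t * Hval xs))).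
  rewrite Estep. apply E_ext. intros xs _. rewrite !Hval_app. simpl.
  rewrite Rplus_0_r, Rmult_plus_distr_l, Rmult_1_r, exp_plus. ring. Qed.

Lemma M_E a t n : dthp_mgf a t n = E a n (fun xs => exp (t * Hval xs)).
Proof. reflexivity. Qed.

Lemma E_affine a n c : E a n (fun xs => 1 + c * lam a n xs) = 1 + c * mean a n.
Proof. assert (H := E_plus a n (fun _ => 1) (fun xs => c * lam a n xs)). cbv beta in H.
  rewrite H, E_const, E_scal. reflexivity. Qed.

Lemma M_lower_step a t n : (forall xs k, 0 <= intensity a xs k <= 1) -> (forall i, 0 < a i) ->
  dthp_mgf a t n * (1 + (exp t - 1) * mean a n) <= dthp_mgf a t (S n).
Proof. intros Hi Hp. rewrite M_step, <- E_affine, M_E.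
  destruct (Rle_or_lt 0 t) as [Ht|Ht].
  - apply assoc; auto.
    + intros xs ys H. apply exp_le'. apply Rmult_le_compat_l; auto. apply Hval_mono; auto.
    + intros xs ys H. assert (0 <= exp t - 1). { pose proof (exp_le' 0 t Ht). rewrite exp_0 in H0; lra. }
      unfold lam. pose proof (intensity_mono a xs ys (S n) Hp H). nra.
  - apply assoc_anti; auto.
    + intros xs ys H. apply Ropp_le_contravar. apply exp_le'. pose proof (Hval_mono _ _ H). nra.
    + intros xs ys H. assert (exp t - 1 < 0). { pose proof (exp_increasing t 0 Ht). rewrite exp_0 in H0; lra. }
      unfold lam. pose proof (intensity_mono a xs ys (S n) Hp H). nra.
Qed.

Lemma M_upper_step a t n B : (forall xs k, 0 <= intensity a xs k <= 1) ->
  (forall xs, 1 + (exp t - 1) * lam a n xs <= B) ->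
  dthp_mgf a t (S n) <= B * dthp_mgf a t n.
Proof. intros Hi HB. rewrite M_step, M_E, <- E_scal. apply E_le. intros; apply pmf_nonneg; auto.
  intros xs _. rewrite Rmult_comm. apply Rmult_le_compat_r. left; apply exp_pos. auto. Qed.

Lemma nth_af xs j : forallb negb xs = true -> nth j xs false = false.
Proof. revert j; induction xs; intros j H; destruct j; simpl in *; auto.
  destruct a; simpl in H; auto; discriminate.
  apply IHxs. destruct a; simpl in H; auto; discriminate. Qed.

Lemma intensity_af a xs k : forallb negb xs = true -> intensity a xs k = a 0%nat.
Proof. intros H. unfold intensity. rewrite (fsum_ext _ _ (fun _ => 0)). rewrite fsum_zero; ring.
  intros i _. unfold xi. rewrite nth_af; auto. simpl; ring. Qed.

Lemma E_af a n : E a n (fun xs => if forallb negb xs then 1 else 0) = (1 - a 0%nat) ^ n.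
Proof. induction n. rewrite E_0. simpl; ring.
  rewrite Estep. simpl pow. rewrite <- IHn, <- E_scal. apply E_ext. intros xs _.
  rewrite !forallb_app. simpl. rewrite Bool.andb_false_r, Bool.andb_true_r.
  destruct (forallb negb xs) eqn:Hx. unfold lam. rewrite intensity_af; auto. ring. ring. Qed.

Lemma Hval_af xs : forallb negb xs = true -> Hval xs = 0.
Proof. induction xs; intros H. reflexivity. rewrite Hval_cons. destruct a; simpl in *. discriminate.
  rewrite IHxs; auto. ring. Qed.

Lemma M_af a t n : (forall xs k, 0 <= intensity a xs k <= 1) -> (1 - a 0%nat) ^ n <= dthp_mgf a t n.
Proof. intros Hi. rewrite <- E_af, M_E. apply E_le. intros; apply pmf_nonneg; auto.
  intros xs _. destruct (forallb negb xs) eqn:Hx. rewrite Hval_af, Rmult_0_r, exp_0; auto; lra.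
  left; apply exp_pos. Qed.


Lemma E_ind a n i : (1 <= i <= n)%nat -> E a n (fun xs => Defs.ind (xi xs i)) = mean a (i - 1).
Proof. intros Hi. replace n with (i + (n - i))%nat by lia. rewrite E_marg.
  2:{ intros xs b H. rewrite xi_app; auto; lia. }
  destruct i as [|i']; [lia|]. rewrite Estep. replace (S i' - 1)%nat with i' by lia.
  unfold mean. apply E_ext. intros xs Hx. apply bool_lists_len in Hx. rewrite <- Hx, !xi_last. simpl. ring. Qed.

Lemma sumS_ext f g n : (forall j, (1 <= j <= n)%nat -> f j = g j) -> sumS f n = sumS g n.
Proof. intros H. unfold sumS. apply fsum_ext. intros j Hj. apply in_seq in Hj. apply H; lia. Qed.

Lemma sumS_le f g n : (forall j, (1 <= j <= n)%nat -> f j <= g j) -> sumS f n <= sumS g n.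
Proof. intros H. unfold sumS. apply fsum_le. intros j Hj. apply in_seq in Hj. apply H; lia. Qed.

Lemma sumS_scal_r f c n : sumS (fun j => f j * c) n = sumS f n * c.
Proof. unfold sumS. rewrite (fsum_ext _ _ (fun j => c * f j)). rewrite fsum_scal; ring. intros; ring. Qed.

Lemma sumS_prefix f J n : (forall j, 0 <= f j) -> sumS f J <= sumS f (J + n).
Proof. intros H. induction n. rewrite Nat.add_0_r; lra. rewrite Nat.add_succ_r, sumS_S. specialize (H (S (J + n))). lra. Qed.

Lemma mean_rec a n : mean a n = a 0%nat + sumS (fun j => a j * mean a (n - j)%nat) n.
Proof. unfold mean, lam, intensity.
  assert (H := E_plus a n (fun _ => a 0%nat)
    (fun xs => fold_right Rplus 0 (map (fun i => a (S n - i)%nat * Defs.ind (xi xs i)) (seq 1 (S n - 1))))).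
  cbv beta in H. rewrite H, E_const. f_equal. clear H.
  rewrite (E_fsum a n _ (fun i xs => a (S n - i)%nat * Defs.ind (xi xs i))).
  replace (S n - 1)%nat with n by lia.
  rewrite <- (sumS_rev (fun j => a j * mean a (n - j)%nat)). unfold sumS. apply fsum_ext.
  intros i Hi. apply in_seq in Hi. rewrite E_scal, E_ind by lia. f_equal. f_equal. lia. Qed.

Lemma mean_ge a n : (forall i, 0 < a i) -> (forall xs k, 0 <= intensity a xs k <= 1) -> a 0%nat <= mean a n.
Proof. intros Hp Hi. unfold mean. rewrite <- (E_const a n (a 0%nat)) at 1. apply E_le.
  intros; apply pmf_nonneg; auto. intros; apply intensity_ge; auto. Qed.

Lemma mean_le_p a n : (forall i, 0 < a i) -> (forall xs k, 0 <= intensity a xs k <= 1) ->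
  (forall n, a 0%nat + sumS a n <= Series a) -> Series a < 1 -> mean a n <= pstar a.
Proof. intros Hp Hi HB HS. unfold pstar. set (r := Series a - a 0%nat).
  assert (Hr : 0 < 1 - r) by (unfold r; specialize (Hp 0%nat); lra).
  assert (Hr0 : 0 <= r) by (unfold r; specialize (HB 0%nat); unfold sumS in HB; simpl in HB; lra).
  assert (Hpp : a 0%nat + r * (a 0%nat / (1 - r)) = a 0%nat / (1 - r)) by (field; lra).
  assert (forall k, (k <= n)%nat -> mean a k <= a 0%nat / (1 - r)).
  { induction n; intros k Hk.
    - replace k with 0%nat by lia. rewrite mean_rec. unfold sumS; simpl.
      assert (0 <= r * (a 0%nat / (1 - r))). { apply Rmult_le_pos; auto. unfold Rdiv. apply Rmult_le_pos.
        left; auto. left; apply Rinv_0_lt_compat; auto. } lra.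
    - destruct (Nat.eq_dec k (S n)); [|apply IHn; lia]. subst k. rewrite mean_rec.
      apply Rle_trans with (a 0%nat + sumS (fun j => a j * (a 0%nat / (1 - r))) (S n)).
      apply Rplus_le_compat_l. apply sumS_le. intros j Hj. apply Rmult_le_compat_l. left; auto. apply IHn; lia.
      rewrite sumS_scal_r. assert (sumS a (S n) <= r) by (unfold r; specialize (HB (S n)); lra).
      assert (0 <= a 0%nat / (1 - r)). { unfold Rdiv. apply Rmult_le_pos. left; auto. left; apply Rinv_0_lt_compat; auto. }
      nra. }
  apply H; lia. Qed.

Lemma mean_incr a n : (forall i, 0 < a i) -> (forall xs k, 0 <= intensity a xs k <= 1) -> mean a n <= mean a (S n).
Proof. intros Hp Hi. assert (forall k, (k <= n)%nat -> mean a k <= mean a (S k)).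
  { induction n; intros k Hk.
    - replace k with 0%nat by lia. rewrite (mean_rec a 1). unfold sumS; simpl.
      pose proof (mean_ge a 0 Hp Hi). pose proof (Hp 1%nat). pose proof (Hp 0%nat). rewrite mean_rec at 1. unfold sumS; simpl. nra.
    - destruct (Nat.eq_dec k (S n)); [|apply IHn; lia]. subst k.
      rewrite (mean_rec a (S (S n))), (mean_rec a (S n)), (sumS_S (fun j => a j * mean a (S (S n) - j)%nat) (S n)).
      assert (sumS (fun j => a j * mean a (S n - j)%nat) (S n) <= sumS (fun j => a j * mean a (S (S n) - j)%nat) (S n)).
      { apply sumS_le. intros j Hj. apply Rmult_le_compat_l. left; auto.
        replace (S (S n) - j)%nat with (S (S n - j)) by lia. apply IHn. lia. }
      pose proof (mean_ge a (S (S n) - S (S n)) Hp Hi). pose proof (Hp (S (S n))). pose proof (Hp 0%nat). assert (0 <= a (S (S n)) * mean a (S (S n) - S (S n))%nat) by (apply Rmult_le_pos; lra). lra. }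
  apply H; lia. Qed.

Lemma mean_mono a k d : (forall i, 0 < a i) -> (forall xs k, 0 <= intensity a xs k <= 1) -> mean a k <= mean a (k + d).
Proof. intros Hp Hi. induction d. rewrite Nat.add_0_r; lra. rewrite Nat.add_succ_r.
  pose proof (mean_incr a (k + d) Hp Hi). lra. Qed.

Lemma mean_lowrec a n J : (forall i, 0 < a i) -> (forall xs k, 0 <= intensity a xs k <= 1) ->
  a 0%nat + sumS a J * mean a n <= mean a (J + n).
Proof. intros Hp Hi. rewrite (mean_rec a (J + n)). apply Rplus_le_compat_l.
  apply Rle_trans with (sumS (fun j => a j * mean a (J + n - j)%nat) J).
  - rewrite <- sumS_scal_r. apply sumS_le. intros j Hj. apply Rmult_le_compat_l. left; auto.
    replace (J + n - j)%nat with (n + (J - j))%nat by lia. apply mean_mono; auto.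
  - apply sumS_prefix. intros j. apply Rmult_le_pos. left; auto. pose proof (mean_ge a (J + n - j) Hp Hi). pose proof (Hp 0%nat). lra.
Qed.


Lemma sumn_eq a n : sum_n a n = a 0%nat + sumS a n.
Proof. induction n. rewrite sum_O. unfold sumS; simpl. symmetry; apply Rplus_0_r.
  rewrite sum_Sn, IHn, sumS_S. unfold plus; simpl. apply Rplus_assoc. Qed.

Lemma lim_ge (u : nat -> R) (l : R) c : (forall n, c <= u (S n)) -> is_lim_seq u l -> c <= l.
Proof. intros H Hl. apply is_lim_seq_incr_1 in Hl.
  pose proof (is_lim_seq_le (fun _ => c) (fun n => u (S n)) c l H (is_lim_seq_const c) Hl) as H0. exact H0. Qed.

Lemma lim_le (u : nat -> R) (l : R) c : (forall n, u (S n) <= c) -> is_lim_seq u l -> l <= c.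
Proof. intros H Hl. apply is_lim_seq_incr_1 in Hl.
  pose proof (is_lim_seq_le (fun n => u (S n)) (fun _ => c) l c H Hl (is_lim_seq_const c)) as H0. exact H0. Qed.

Lemma logbound_lo r M n : 0 < r -> r ^ (S n) <= M -> ln r <= / INR (S n) * ln M.
Proof. intros Hr HM. assert (HN : 0 < INR (S n)) by (apply lt_0_INR; lia).
  assert (ln (r ^ S n) <= ln M) by (apply ln_le; auto; apply pow_lt; auto).
  rewrite ln_pow in H; auto.
  replace (ln r) with (/ INR (S n) * (INR (S n) * ln r)) by (field; lra).
  apply Rmult_le_compat_l; auto. left; apply Rinv_0_lt_compat; auto. Qed.

Lemma logbound_hi B M n : 0 < B -> 0 < M -> M <= B ^ (S n) -> / INR (S n) * ln M <= ln B.
Proof. intros HB Hm HM. assert (HN : 0 < INR (S n)) by (apply lt_0_INR; lia).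
  assert (ln M <= ln (B ^ S n)) by (apply ln_le; auto).
  rewrite ln_pow in H; auto.
  replace (ln B) with (/ INR (S n) * (INR (S n) * ln B)) by (field; lra).
  apply Rmult_le_compat_l; auto. left; apply Rinv_0_lt_compat; auto. Qed.

Lemma inv_n_lim : is_lim_seq (fun n => / INR n) 0.
Proof. pose proof (is_lim_seq_inv INR p_infty is_lim_seq_INR). simpl in H. apply H. discriminate. Qed.

Theorem theorem4p9 (a : nat -> R)
  (Hpos : forall i, 0 < a i)
  (Hex : ex_series a)
  (Hlt1 : Series a < 1)
  (Hmean : ex_series (fun i => INR i * a i))
  (Gamma : R -> R)
  (HGamma : forall t,
     is_lim_seq (fun n => / INR n * ln (dthp_mgf a t n)) (Gamma t)) :
  (forall t, 0 <= t ->
     ln (1 + (exp t - 1) * pstar a) <= Gamma t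
     <= ln (1 + (exp t - 1) * Series a)) /\
  (forall t, t < 0 ->
     Rmax (ln (1 + (exp t - 1) * pstar a)) (ln (1 - a 0%nat)) <= Gamma t
     <= ln (1 + (exp t - 1) * a 0%nat)).
Proof.
  assert (HS : is_lim_seq (sum_n a) (Series a)) by (exact (Series_correct a Hex)).
  assert (HB : forall n, a 0%nat + sumS a n <= Series a).
  { intros n. rewrite <- sumn_eq. apply (is_lim_seq_incr_compare _ _ HS). intros m.
    rewrite sum_Sn. unfold plus; simpl. pose proof (Hpos (S m)). lra. }
  assert (Hi : forall xs k, 0 <= intensity a xs k <= 1).
  { intros xs k. pose proof (intensity_ge a xs k Hpos). pose proof (intensity_le a xs k Hpos HB).
    pose proof (Hpos 0%nat). lra. }
  assert (Ha0 : 0 < a 0%nat) by auto.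
  assert (Ha01 : a 0%nat < 1) by (specialize (HB 0%nat); unfold sumS in HB; simpl in HB; lra).
  set (r := Series a - a 0%nat).
  assert (Hr : 0 < 1 - r) by (unfold r; lra).
  assert (Hps : pstar a = a 0%nat / (1 - r)) by reflexivity.
  assert (Hp0 : 0 < pstar a) by (rewrite Hps; apply Rdiv_lt_0_compat; lra).
  assert (Hp1 : pstar a < 1) by (rewrite Hps; apply Rlt_div_l; unfold r; lra).
  assert (Hmp : forall n, mean a n <= pstar a) by (intros; apply mean_le_p; auto).
  assert (Hmg : forall n, a 0%nat <= mean a n) by (intros; apply mean_ge; auto).
  assert (HMpos : forall t n, 0 < dthp_mgf a t n).
  { intros t n. apply Rlt_le_trans with ((1 - a 0%nat) ^ n). apply pow_lt; lra. apply M_af; auto. }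
  assert (HMup : forall t B, 0 <= B -> (forall n xs, 1 + (exp t - 1) * lam a n xs <= B) ->
             forall n, dthp_mgf a t n <= B ^ n).
  { intros t B HB0 Hb n. induction n. unfold dthp_mgf; simpl. rewrite Rmult_0_r, exp_0. unfold dthp_pmf; simpl; lra.
    apply Rle_trans with (B * dthp_mgf a t n). apply M_upper_step; auto. simpl. apply Rmult_le_compat_l; auto. }
  assert (HM0 : forall t, dthp_mgf a t 0 = 1).
  { intros t. unfold dthp_mgf, dthp_pmf; simpl. rewrite Rmult_0_r, exp_0. ring. }
  split.
  - intros t Ht. set (c := exp t - 1).
    assert (Hc : 0 <= c) by (unfold c; pose proof (exp_le' 0 t Ht); rewrite exp_0 in H; lra).
    split.
    +
      destruct (ex_finite_lim_seq_incr (mean a) (pstar a)) as [L HL].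
      { intros; apply mean_incr; auto. } { auto. }
      assert (HLp : pstar a <= L).
      { assert (HJ : forall J, a 0%nat + sumS a J * L <= L).
        { intros J. pose proof (is_lim_seq_le (fun n => a 0%nat + sumS a J * mean a n) (fun n => mean a (n + J)%nat)
            (a 0%nat + sumS a J * L) L) as H.
          simpl in H. apply H.
          - intros n. rewrite Nat.add_comm. apply mean_lowrec; auto.
          - apply is_lim_seq_plus'. apply is_lim_seq_const. apply is_lim_seq_mult'. apply is_lim_seq_const. auto.
          - apply -> is_lim_seq_incr_n. auto. }
        assert (a 0%nat + r * L <= L).
        { pose proof (is_lim_seq_le (fun J => a 0%nat + (sum_n a J - a 0%nat) * L) (fun _ => L)
            (a 0%nat + (Series a - a 0%nat) * L) L) as H. simpl in H. apply H.
          - intros J. rewrite sumn_eq. replace (a 0%nat + sumS a J - a 0%nat) with (sumS a J) by ring. auto.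
          - apply is_lim_seq_plus'. apply is_lim_seq_const. apply is_lim_seq_mult'.
            apply is_lim_seq_minus'. auto. apply is_lim_seq_const. apply is_lim_seq_const.
          - apply is_lim_seq_const. }
        rewrite Hps. apply Rle_div_l. lra. lra. }
      assert (HMge1 : forall n, 1 <= dthp_mgf a t n).
      { induction n. rewrite HM0; lra. pose proof (M_lower_step a t n Hi Hpos). fold c in H.
        pose proof (Hmg n). assert (1 <= 1 + c * mean a n) by nra. nra. }
      assert (HK : forall K, 1 + c * mean a K <= exp (Gamma t)).
      { intros K. set (q := 1 + c * mean a K).
        assert (Hq : 1 <= q) by (unfold q; pose proof (Hmg K); nra).
        assert (Hd : forall d, q ^ d <= dthp_mgf a t (K + d)).
        { induction d. simpl. rewrite Nat.add_0_r. auto.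
          rewrite Nat.add_succ_r. pose proof (M_lower_step a t (K + d) Hi Hpos). fold c in H.
          pose proof (mean_mono a K d Hpos Hi). assert (q <= 1 + c * mean a (K + d)) by (unfold q; nra).
          simpl. assert (0 <= q ^ d) by (apply pow_le; lra). nra. }
        assert (Hlq : 0 <= ln q) by (rewrite <- ln_1; apply ln_le; lra).
        assert (ln q <= Gamma t).
        { pose proof (is_lim_seq_le (fun n => (1 - INR K * / INR (S n)) * ln q)
             (fun n => / INR (S n) * ln (dthp_mgf a t (S n))) (ln q) (Gamma t)) as H. apply H.
          - intros n. assert (HN : 0 < INR (S n)) by (apply lt_0_INR; lia).
            destruct (le_lt_dec (S n) K) as [Hn|Hn].
            + apply le_INR in Hn. assert (1 <= INR K * / INR (S n)).
              { apply Rmult_le_reg_r with (INR (S n)); auto. rewrite Rmult_assoc, Rinv_l by lra. lra. }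
              assert (0 <= / INR (S n) * ln (dthp_mgf a t (S n))).
              { apply Rmult_le_pos. left; apply Rinv_0_lt_compat; auto. rewrite <- ln_1. apply ln_le; auto; lra. }
              nra.
            + set (d := (S n - K)%nat). replace (S n) with (K + d)%nat by (unfold d; lia).
              assert (HN' : 0 < INR (K + d)) by (replace (K + d)%nat with (S n) by (unfold d; lia); auto).
              assert (ln (q ^ d) <= ln (dthp_mgf a t (K + d))) by (apply ln_le; auto; apply pow_lt; lra).
              rewrite ln_pow in H0 by lra. rewrite plus_INR in *.
              replace ((1 - INR K * / (INR K + INR d)) * ln q) with (/ (INR K + INR d) * (INR d * ln q)) by (field; lra).
              apply Rmult_le_compat_l; auto. left; apply Rinv_0_lt_compat; auto.
          - assert (Hw : is_lim_seq (fun n => (1 - INR K * / INR n) * ln q) ((1 - INR K * 0) * ln q)).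
            { apply is_lim_seq_mult'. apply is_lim_seq_minus'. apply is_lim_seq_const.
              apply is_lim_seq_mult'. apply is_lim_seq_const. apply inv_n_lim. apply is_lim_seq_const. }
            replace ((1 - INR K * 0) * ln q) with (ln q) in Hw by ring.
            apply (is_lim_seq_incr_1 _ _) in Hw. exact Hw.
          - apply -> (is_lim_seq_incr_1 (fun n => / INR n * ln (dthp_mgf a t n))). apply HGamma. }
        rewrite <- (exp_ln q) by lra. apply exp_le'; auto. }
      assert (1 + c * L <= exp (Gamma t)).
      { pose proof (is_lim_seq_le (fun K => 1 + c * mean a K) (fun _ => exp (Gamma t)) (1 + c * L) (exp (Gamma t))) as H.
        simpl in H. apply H. auto. apply is_lim_seq_plus'. apply is_lim_seq_const. apply is_lim_seq_mult'. apply is_lim_seq_const. auto.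
        apply is_lim_seq_const. }
      rewrite <- (ln_exp (Gamma t)). apply ln_le. nra. nra.
    +
      assert (HB1 : 1 <= 1 + c * Series a) by (pose proof (Hpos 0%nat); specialize (HB 0%nat); unfold sumS in HB; simpl in HB; nra).
      assert (Hb : forall m xs, 1 + (exp t - 1) * lam a m xs <= 1 + c * Series a).
      { intros m xs. fold c. pose proof (intensity_le a xs (S m) Hpos HB). unfold lam. nra. }
      assert (HB0 : 0 < 1 + c * Series a) by lra.
      pose proof (HMup t (1 + c * Series a) ltac:(lra) Hb) as HU.
      apply (lim_le _ _ _ (fun n => logbound_hi _ _ n HB0 (HMpos t (S n)) (HU (S n))) (HGamma t)).
  - intros t Ht. set (c := exp t - 1).
    assert (Hc : c < 0) by (unfold c; pose proof (exp_increasing t 0 Ht); rewrite exp_0 in H; lra).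
    assert (Hc1 : -1 < c) by (unfold c; pose proof (exp_pos t); lra).
    split.
    + apply Rmax_lub.
      * assert (Hr' : 0 < 1 + c * pstar a) by nra.
        assert (HM : forall n, (1 + c * pstar a) ^ n <= dthp_mgf a t n).
        { induction n. rewrite HM0; simpl; lra. pose proof (M_lower_step a t n Hi Hpos). fold c in H.
          pose proof (Hmp n). assert (1 + c * pstar a <= 1 + c * mean a n) by nra.
          assert (0 <= (1 + c * pstar a) ^ n) by (apply pow_le; lra). simpl. nra. }
        apply (lim_ge _ _ _ (fun n => logbound_lo _ _ n Hr' (HM (S n))) (HGamma t)).
      * assert (H1a : 0 < 1 - a 0%nat) by lra.
        apply (lim_ge _ _ _ (fun n => logbound_lo _ _ n H1a (M_af a t (S n) Hi)) (HGamma t)).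
    + assert (Hb : forall m xs, 1 + (exp t - 1) * lam a m xs <= 1 + c * a 0%nat).
      { intros m xs. fold c. pose proof (intensity_ge a xs (S m) Hpos). unfold lam. nra. }
      assert (HB0 : 0 < 1 + c * a 0%nat) by nra.
      pose proof (HMup t (1 + c * a 0%nat) ltac:(lra) Hb) as HU.
      apply (lim_le _ _ _ (fun n => logbound_hi _ _ n HB0 (HMpos t (S n)) (HU (S n))) (HGamma t)).
Qed.
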